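(* Let $P$ be a finite order having no level-induced suborder isomorphic to $O_{obs1}$ and no level-induced suborder isomorphic to $O_{obs2}$ (in particular, any finite order with property (itov)). Then $P$ has a relatively maximum full trunk.
   Context: Orders are partial orders; $x\sim y$ means $x\ne y$ and $x,y$ incomparable. $O_{obs1}$ is the order on $\{a,b,c,d\}$ whose only comparabilities are $a<b$, $c<d$; $O_{obs2}$ is the order on $\{a,b,c,d\}$ whose only comparabilities are $a<b$, $c<d$, $c<b$. Property (itov): no induced suborder isomorphic to $O_{obs1}$ or $O_{obs2}$. For a well-founded (e.g. finite) order $Q$, $\mathrm{Level}_Q(x)=\sup\{\mathrm{Level}_Q(y)+1:y<x\}$. A level-induced suborder of $P$ is a subset $S$ with the induced order $P|_S$ such that for all $x,y\in S$: $\mathrm{Level}_{P|_S}(x)=\mathrm{Level}_{P|_S}(y)$ iff $\mathrm{Level}_P(x)=\mathrm{Level}_P(y)$. A trunk of $P$ is a subset $T$ such that for pairwise distinct $x,y,z\in T$, $x\sim y$ and $y\sim z$ imply $x\sim z$. A chain is maximum if it has maximum cardinality among chains of $P$. A full trunk is a trunk containing a maximum chain; a relatively maximum full trunk is a full trunk that is the unique inclusion-maximal full trunk of $P$. *)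

(* Defs.v *)
From mathcomp Require Import all_boot.
Set Implicit Arguments. Unset Strict Implicit. Unset Printing Implicit Defensive.

Section Orders.
Variables (T : finType) (le : rel T).

Definition partial_order : Prop :=
  [/\ reflexive le, antisymmetric le & transitive le].

Definition lt (x y : T) : bool := (x != y) && le x y.

Definition incomp (x y : T) : bool := [&& x != y, ~~ le x y & ~~ le y x].

(* Level of x in the induced suborder P|_S, by the recursion
   Level(x) = sup { Level(y)+1 : y < x, y in S }  (sup of empty = 0),
   computed with fuel; fuel #|T| is always sufficient (strict chains in a
   finite order have fewer than #|T| steps). *)
Fixpoint level_fuel (S : {set T}) (n : nat) (x : T) : nat :=
  match n with
  | 0 => 0
  | n'.+1 => \max_(y in S | lt y x) (level_fuel S n' y).+1
  end.

Definition level (S : {set T}) (x : T) : nat := level_fuel S #|T| x.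

Definition level_induced (S : {set T}) : Prop :=
  forall x y, x \in S -> y \in S ->
    (level S x == level S y) = (level [set: T] x == level [set: T] y).

(* The obstruction orders on {a,b,c,d} = {0,1,2,3} (a=0,b=1,c=2,d=3). *)
Definition O_obs1 (i j : 'I_4) : bool :=
  [|| i == j, (val i == 0) && (val j == 1) | (val i == 2) && (val j == 3)].

Definition O_obs2 (i j : 'I_4) : bool :=
  [|| i == j, (val i == 0) && (val j == 1), (val i == 2) && (val j == 3)
    | (val i == 2) && (val j == 1)].

Definition induced_iso (S : {set T}) (O : rel 'I_4) : Prop :=
  exists f : 'I_4 -> T,
    [/\ injective f, f @: [set: 'I_4] = S &
        forall i j, le (f i) (f j) = O i j].

Definition trunk (A : {set T}) : Prop :=
  forall x y z, x \in A -> y \in A -> z \in A ->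
    x != y -> y != z -> x != z ->
    incomp x y -> incomp y z -> incomp x z.

Definition chain (C : {set T}) : Prop :=
  forall x y, x \in C -> y \in C -> le x y || le y x.

Definition maximum_chain (C : {set T}) : Prop :=
  chain C /\ forall C' : {set T}, chain C' -> #|C'| <= #|C|.

Definition full_trunk (A : {set T}) : Prop :=
  trunk A /\ exists C, maximum_chain C /\ C \subset A.

Definition maximal_full_trunk (A : {set T}) : Prop :=
  full_trunk A /\ forall B, full_trunk B -> A \subset B -> B = A.

Definition relatively_maximum_full_trunk (A : {set T}) : Prop :=
  maximal_full_trunk A /\ forall B, maximal_full_trunk B -> B = A.

End Orders.

(* Main.v *)
Require Import Defs.
From mathcomp Require Import all_boot zify.
From Stdlib Require Import ClassicalEpsilon.
Set Implicit Arguments. Unset Strict Implicit. Unset Printing Implicit Defensive.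

Section Lev.
Variables (T : finType) (le : rel T).
Hypotheses (lerefl : reflexive le) (leanti : antisymmetric le)
  (letrans : transitive le).

Local Notation lt := (Defs.lt le).
Local Notation L := (level le [set: T]).

Lemma ltW x y : lt x y -> le x y.
Proof. by case/andP. Qed.

Lemma lt_irr x : lt x x = false.
Proof. by rewrite /Defs.lt eqxx. Qed.

Lemma lt_nle x y : lt x y -> le y x = false.
Proof.
case/andP=> nxy lxy; apply/negP => lyx.
by move: nxy; rewrite (leanti (x:=x) (y:=y)) ?lxy ?lyx ?eqxx.
Qed.

Lemma lt_trans x y z : lt x y -> lt y z -> lt x z.
Proof.
move=> hxy hyz; apply/andP; split; last exact: letrans (ltW hxy) (ltW hyz).
apply/eqP => exz; subst z.
by move: (lt_nle hxy); rewrite (ltW hyz).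
Qed.

Lemma le_lt x y : le x y -> x != y -> lt x y.
Proof. by move=> h1 h2; apply/andP. Qed.

Lemma lf_stable n x : #|[set z | lt z x]| < n ->
  level_fuel le setT n x = level_fuel le setT n.+1 x.
Proof.
elim: n x => [//|n IH] x hc /=.
apply: eq_bigr => y /andP[_ hy]; congr S; apply: IH.
have: [set z | lt z y] \proper [set z | lt z x].
  apply/properP; split.
    by apply/subsetP => z; rewrite !inE => hz; exact: lt_trans hz hy.
  by exists y; rewrite !inE ?lt_irr ?hy.
move/proper_card => h; lia.
Qed.

Lemma card_below x : #|[set z | lt z x]| < #|T|.
Proof.
have h : [set z | lt z x] \subset [set~ x].
  by apply/subsetP => z; rewrite !inE => /andP[].
have := subset_leq_card h; rewrite cardsC1.
have : 0 < #|T| by apply/card_gt0P; exists x.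
lia.
Qed.

Lemma Lfix x : L x = \max_(y in [set: T] | lt y x) (L y).+1.
Proof. by rewrite /level (lf_stable (card_below x)). Qed.

Lemma L_mono x y : lt y x -> L y < L x.
Proof.
move=> h; rewrite (Lfix x).
by apply: (leq_bigmax_cond (P := fun y => (y \in [set: T]) && lt y x)); rewrite inE.
Qed.

Lemma le_L x y : le x y -> L x <= L y.
Proof.
move=> h; case: (eqVneq x y) => [->//|ne].
exact: ltnW (L_mono (le_lt h ne)).
Qed.

Lemma L_chain x : exists D : {set T},
  [/\ chain le D, x \in D, (forall d, d \in D -> le d x) & #|D| = (L x).+1].
Proof.
move: {2}(L x) (erefl (L x)) => k; elim: k x => [|k IH] x hk.
  exists [set x]; split; rewrite ?cards1 ?hk ?inE //.
    by move=> a b; rewrite !inE => /eqP-> /eqP->; rewrite lerefl.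
  by move=> d; rewrite inE => /eqP->.
have hp : 0 < #|(fun y => (y \in [set: T]) && lt y x)|.
  apply/card_gt0P; case: (pickP (fun y => (y \in [set: T]) && lt y x)) => [y hy|h0].
    by exists y.
  by move: hk; rewrite Lfix big_pred0.
case: (eq_bigmax_cond (fun y => (L y).+1) hp) => y hy hm.
move: hy; rewrite unfold_in /= => /andP[_ hy].
move: hk; rewrite Lfix hm => -[] /IH [D [cD yD dD cardD]].
exists (x |: D); split.
- move=> a b; rewrite !inE => /orP[/eqP->|ha] /orP[/eqP->|hb].
  + by rewrite lerefl.
  + by rewrite (letrans (dD _ hb) (ltW hy)) orbT.
  + by rewrite (letrans (dD _ ha) (ltW hy)).
  + exact: cD.
- by rewrite !inE eqxx.
- move=> d; rewrite !inE => /orP[/eqP->|hd]; first exact: lerefl.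
  exact: letrans (dD _ hd) (ltW hy).
- rewrite cardsU1 cardD; case: (boolP (x \in D)) => //= hx.
  by move: (lt_nle hy); rewrite dD.
Qed.


Lemma Lge (D : {set T}) : chain le D -> forall c, #|[set d in D | lt d c]| <= L c.
Proof.
move=> cD c; move: {2}(L c) (leqnn (L c)) => k; elim: k c => [|k IH] c hk.
  have -> : L c = 0 by lia.
  rewrite leqn0 cards_eq0; apply/eqP/setP => d; rewrite !inE.
  apply/negP => /andP[_ /L_mono]; lia.
case: (posnP #|[set d in D | lt d c]|) => [->//|hp].
case: (eq_bigmax_cond L hp) => m hm hmax.
have hmc : lt m c by move: hm; rewrite inE => /andP[].
have hmD : m \in D by move: hm; rewrite inE => /andP[].
have sub : [set d in D | lt d c] :\ m \subset [set d in D | lt d m].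
  apply/subsetP => d; rewrite !inE => /andP[ndm /andP[dD dc]]; rewrite dD /=.
  case/orP: (cD _ _ dD hmD) => h; first exact: le_lt.
  have : lt m d by apply: le_lt; rewrite // eq_sym.
  move/L_mono; have : L d <= L m.
    by rewrite -hmax; apply: (leq_bigmax_cond (P := fun d => d \in [set d in D | lt d c])); rewrite inE dD.
  lia.
have h1 := subset_leq_card sub.
have h2 : #|[set d in D | lt d m]| <= L m.
  apply: IH; have := L_mono hmc; lia.
have := cardsD1 m [set d in D | lt d c]; rewrite hm.
have := L_mono hmc; lia.
Qed.

Definition maxch (C : {set T}) := maximum_chain le C.

Lemma L_bound C x : maxch C -> L x < #|C|.
Proof.
case=> _ hC; case: (L_chain x) => D [cD _ _ hD].
by have := hC D cD; rewrite hD.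
Qed.

Lemma L_maxchain C c : maxch C -> c \in C -> L c = #|[set d in C | lt d c]|.
Proof.
move=> [cC hC] cin; apply/eqP; rewrite eqn_leq Lge // andbT.
case: (L_chain c) => D [cD cinD dD hD].
set Up := [set d in C | lt c d].
set B := [set d in C | lt d c].
have cU : chain le (D :|: Up).
  move=> a b; rewrite !inE => /orP[ha|/andP[ha hca]] /orP[hb|/andP[hb hcb]].
  - exact: cD.
  - by rewrite (letrans (dD _ ha) (ltW hcb)).
  - by rewrite (letrans (dD _ hb) (ltW hca)) orbT.
  - exact: cC.
have dis : D :&: Up = set0.
  apply/setP => d; rewrite !inE; apply/negP => /andP[hd /andP[_ hcd]].
  by move: (lt_nle hcd); rewrite dD.
have h1 := hC _ cU.
have h2 := cardsUI D Up; rewrite dis cards0 addn0 in h2.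
have sub : C \subset c |: (B :|: Up).
  apply/subsetP => d hd; rewrite !inE hd /=.
  case: (eqVneq d c) => //= ndc.
  case/orP: (cC _ _ hd cin) => h; first by rewrite le_lt.
  by rewrite (@le_lt c d) ?orbT // eq_sym.
have h3 := subset_leq_card sub.
have h4 := cardsU1 c (B :|: Up).
have h5 := cardsUI B Up.
move: (c \notin B :|: Up) h4 => b h4.
have : b <= 1 by case: b h4.
lia.
Qed.

Lemma L_onto C k : maxch C -> k < #|C| -> exists2 c, c \in C & L c = k.
Proof.
move=> hC hk; have [cC _] := hC.
case: (boolP (k \in map L (enum C))) => [/mapP[c] | nk].
  by rewrite mem_enum => hc ->; exists c.
have u : uniq (map L (enum C)).
  rewrite map_inj_in_uniq ?enum_uniq // => a b; rewrite !mem_enum => ha hb e.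
  case: (eqVneq a b) => // nab; exfalso.
  case/orP: (cC _ _ ha hb) => h.
    by move: (L_mono (le_lt h nab)); rewrite e ltnn.
  by rewrite eq_sym in nab; move: (L_mono (le_lt h nab)); rewrite e ltnn.
have sb : {subset map L (enum C) <= rem k (iota 0 #|C|)}.
  move=> v hv; rewrite (mem_rem_uniq _ (iota_uniq _ _)) inE mem_iota add0n.
  case: (eqVneq v k) => [ev|nv]; first by move: nk; rewrite -ev hv.
  by move: hv => /mapP[c _ ->]; rewrite (L_bound _ hC).
have := uniq_leq_size u sb.
rewrite size_map -cardE size_rem ?size_iota ?mem_iota //; lia.
Qed.


Lemma incompC x y : incomp le x y = incomp le y x.
Proof. by rewrite /incomp eq_sym; case: (le x y); case: (le y x); rewrite ?andbF. Qed.

Lemma F2 A C x c0 : trunk le A -> maxch C -> C \subset A -> x \in A ->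
  c0 \in C -> incomp le x c0 -> L x = L c0.
Proof.
move=> tA hC sCA xA c0C inc.
have [cC mC] := hC.
move: (inc); rewrite /incomp => /and3P[nx nl1 nl2].
have xC : x \notin C.
  by apply/negP => xC; case/orP: (cC _ _ xC c0C); apply/negP.
set C' := x |: (C :\ c0).
have cC' : chain le C'.
  have cx : forall u, u \in C :\ c0 -> le x u || le u x.
    move=> u; rewrite !inE => /andP[nu uC]; apply/negPn/negP => nc.
    have ixu : incomp le x u.
      rewrite /incomp; move: nc; rewrite negb_or => /andP[h1 h2]; rewrite h1 h2 !andbT.
      by apply/eqP => exu; move: xC; rewrite exu uC.
    have : incomp le c0 u.
      apply: (tA c0 x u) => //.
      + exact: (subsetP sCA).
      + exact: (subsetP sCA).
      + by rewrite eq_sym.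
      + by move: ixu => /and3P[].
      + by rewrite eq_sym.
      + by rewrite incompC.
    by case/and3P => _ h1 h2; move: (cC _ _ c0C uC); rewrite (negbTE h1) (negbTE h2).
  move=> a b; rewrite !inE => /orP[/eqP->|ha] /orP[/eqP->|hb].
  + by rewrite lerefl.
  + by apply: cx; rewrite !inE.
  + by rewrite orbC; apply: cx; rewrite !inE.
  + by move: ha hb => /andP[_ ha] /andP[_ hb]; apply: cC.
have hC' : maxch C'.
  split=> // D cD; apply: (leq_trans (mC D cD)).
  have xn : x \notin C :\ c0 by rewrite !inE (negbTE xC) andbF.
  rewrite cardsU1 xn (cardsD1 c0 C) c0C; lia.
rewrite (L_maxchain hC' (setU11 _ _)) (L_maxchain hC c0C).
apply: eq_card => d; rewrite !inE.
case: (eqVneq d x) => [->|ndx]; first by rewrite lt_irr /= (negbTE xC).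
case: (eqVneq d c0) => [->|ndc] /=; first by rewrite lt_irr andbF.
case dC: (d \in C) => //=.
have dC' : d \in C' by rewrite !inE ndc dC orbT.
have xC' : x \in C' by rewrite !inE eqxx.
apply/idP/idP => h.
- case/orP: (cC _ _ dC c0C) => h'; first by apply: le_lt.
  by move: nl2; rewrite (letrans h' (ltW h)).
- case/orP: (cC' _ _ dC' xC') => h'; first by apply: le_lt.
  by move: nl1; rewrite (letrans h' (ltW h)).
Qed.


Lemma lf0 (S : {set T}) n z : (forall u, u \in S -> lt u z = false) ->
  level_fuel le S n z = 0.
Proof. by case: n => //= n h; rewrite big_pred0 // => u; case: (boolP (u \in S)) => //= /h. Qed.

Lemma lf1 (S : {set T}) n z : 0 < n -> (exists2 u, u \in S & lt u z) ->
  (forall u, u \in S -> lt u z -> forall v, v \in S -> lt v u = false) ->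
  level_fuel le S n z = 1.
Proof.
case: n => // n _ [u uS uz] h /=.
rewrite (eq_bigr (fun _ => 1)); last first.
  by move=> y /andP[yS yz]; rewrite lf0 //; apply: h.
apply/eqP; rewrite eqn_leq; apply/andP; split.
  by apply/bigmax_leqP.
by apply: (leq_bigmax_cond (P := fun y => (y \in S) && lt y z) (F := fun _ => 1) u); rewrite uS.
Qed.

Lemma obs_contra a b c d :
  (forall S : {set T}, level_induced le S -> ~ induced_iso le S (@O_obs1)) ->
  (forall S : {set T}, level_induced le S -> ~ induced_iso le S (@O_obs2)) ->
  le a b -> le c d -> le b a = false -> le a c = false -> le c a = false ->
  le a d = false -> le d a = false -> le b c = false -> le b d = false ->
  le d b = false -> le d c = false ->
  L a = L c -> L b = L d -> L a != L b -> False.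
Proof.
move=> H1 H2 ab cd ba ac ca ad da bc bd db dc Lac Lbd Lab.
have ne : forall x y, le x y = false -> (x == y) = false.
  by move=> x y h; apply/negP => /eqP e; move: h; rewrite e lerefl.
have nab := ne _ _ ba; have nba := ne _ _ ba; rewrite eq_sym in nab.
have nac := ne _ _ ac; have nca := ne _ _ ac; rewrite eq_sym in nca.
have nad := ne _ _ ad; have nda := ne _ _ ad; rewrite eq_sym in nda.
have nbc := ne _ _ bc; have ncb := ne _ _ bc; rewrite eq_sym in ncb.
have nbd := ne _ _ bd; have ndb := ne _ _ bd; rewrite eq_sym in ndb.
have ncd := ne _ _ dc; have ndc := ne _ _ dc; rewrite eq_sym in ncd.
have ltF : forall x y, le x y = false -> lt x y = false.
  by move=> x y h; rewrite /Defs.lt h andbF.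
set S := [set a; b; c; d].
have inS : forall z, z \in S -> [\/ z = a, z = b, z = c | z = d].
  move=> z; rewrite !inE => /orP[/orP[/orP[/eqP->|/eqP->]|/eqP->]|/eqP->]; [constructor 1|constructor 2|constructor 3|constructor 4]; done.
have aS : a \in S by rewrite !inE eqxx.
have bS : b \in S by rewrite !inE eqxx ?orbT.
have cS : c \in S by rewrite !inE eqxx ?orbT.
have dS : d \in S by rewrite !inE eqxx ?orbT.
have mina : forall u, u \in S -> lt u a = false.
  by move=> u /inS[]->; rewrite ?lt_irr ?ltF.
have minc : forall u, u \in S -> lt u c = false.
  by move=> u /inS[]->; rewrite ?lt_irr ?ltF.
have T0 : 0 < #|T| by apply/card_gt0P; exists a.
pose top z := (z == b) || (z == d).
have lvS : forall z, z \in S -> level le S z = top z.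
  move=> z /inS[]->; rewrite /level /top ?eqxx ?nab ?nbd ?nad ?ncb ?ncd ?ndb ?orbT /=.
  - exact: lf0.
  - apply: lf1 => //; first by exists a; rewrite // /Defs.lt nab ab.
    move=> u /inS[]-> h; [exact: mina | by rewrite lt_irr in h | exact: minc | by rewrite (ltF _ _ db) in h].
  - exact: lf0.
  - apply: lf1 => //; first by exists c; rewrite // /Defs.lt ncd cd.
    move=> u /inS[]-> h; [by rewrite (ltF _ _ ad) in h | by rewrite (ltF _ _ bd) in h | exact: minc | by rewrite lt_irr in h].
have lvP : forall z, z \in S -> L z = if top z then L b else L a.
  by move=> z /inS[]->; rewrite /top ?eqxx ?nab ?nbd ?ncb ?ncd ?ndb ?nad ?orbT.
have li : level_induced le S.
  move=> x y xS yS; rewrite (lvS x) // (lvS y) // (lvP x) // (lvP y) //.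
  case: (top x); case: (top y); rewrite ?eqxx //; [move: Lab; rewrite eq_sym | move: Lab] => /negbTE -> //.
pose f := fun i : 'I_4 => nth a [:: a; b; c; d] i.
have iso : forall O : rel 'I_4, (forall i j, le (f i) (f j) = O i j) -> induced_iso le S O.
  move=> O hO; exists f; split => //.
    move=> i j e; apply/val_inj; move: e.
    case: i => [[|[|[|[|i]]]] hi]; case: j => [[|[|[|[|j]]]] hj] //=;
      by move/eqP; rewrite ?nab ?nba ?nac ?nca ?nad ?nda ?nbc ?ncb ?nbd ?ndb ?ncd ?ndc.
  apply/setP => z; apply/imsetP/idP.
    by case=> -[[|[|[|[|i]]]] hi] _ -> //=.
  move/inS => [] ->.
  - by exists (@Ordinal 4 0 isT).
  - by exists (@Ordinal 4 1 isT).
  - by exists (@Ordinal 4 2 isT).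
  - by exists (@Ordinal 4 3 isT).
case hcb : (le c b).
- apply: (H2 S li); apply: iso => -[[|[|[|[|i]]]] hi] -[[|[|[|[|j]]]] hj] //=;
    by rewrite /O_obs2 /= ?lerefl.
- apply: (H1 S li); apply: iso => -[[|[|[|[|i]]]] hi] -[[|[|[|[|j]]]] hj] //=;
    by rewrite /O_obs1 /= ?lerefl.
Qed.


Lemma sameL_nle u v : L u = L v -> u != v -> le u v = false.
Proof.
move=> e ne; apply/negP => h; have := L_mono (le_lt h ne); rewrite e ltnn //.
Qed.

Lemma ftc A C x k : trunk le A -> maxch C -> C \subset A -> x \in A ->
  k < #|C| -> k != L x -> exists2 c, c \in C & L c = k /\ (le x c || le c x).
Proof.
move=> tA hC sCA xA hk nk.
case: (L_onto hC hk) => c cC Lc; exists c => //; split => //.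
apply/negPn/negP => nc.
have inc : incomp le x c.
  rewrite /incomp; move: nc; rewrite negb_or => /andP[h1 h2]; rewrite h1 h2 !andbT.
  by apply/eqP => e; move: h1; rewrite e lerefl.
by move: nk; rewrite -Lc (F2 tA hC sCA xA cC inc) eqxx.
Qed.

Lemma key_aux x y A1 C1 A2 C2 :
  (forall S : {set T}, level_induced le S -> ~ induced_iso le S (@O_obs1)) ->
  (forall S : {set T}, level_induced le S -> ~ induced_iso le S (@O_obs2)) ->
  trunk le A1 -> maxch C1 -> C1 \subset A1 -> x \in A1 ->
  trunk le A2 -> maxch C2 -> C2 \subset A2 -> y \in A2 ->
  incomp le x y -> L x < L y -> False.
Proof.
move=> H1 H2 t1 m1 s1 x1 t2 m2 s2 y2 inc lxy.
move: (inc); rewrite /incomp => /and3P[nxy nlxy nlyx].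
have nlxy' := negbTE nlxy; have nlyx' := negbTE nlyx.
have hy1 := L_bound y m1.
have hne1 : L y != L x by rewrite eq_sym ltn_eqF.
case: (ftc t1 m1 s1 x1 hy1 hne1) => c cC1 [Lc cmpc].
have hy2 := L_bound y m2.
have hx2 : L x < #|C2| := ltn_trans lxy hy2.
have hne : L x != L y by rewrite ltn_eqF.
case: (ftc t2 m2 s2 y2 hx2 hne) => d dC2 [Ld cmpd].
have cx : le c x = false by apply/negP => /le_L; rewrite Lc leqNgt lxy.
have xc : le x c by move: cmpc; rewrite cx orbF.
have yd : le y d = false by apply/negP => /le_L; rewrite Ld leqNgt lxy.
have dy : le d y by move: cmpd; rewrite yd orFb.
have nxd : x != d by apply/eqP => e; move: nlxy'; rewrite e dy.
have ncy : c != y by apply/eqP => e; move: nlxy'; rewrite -e xc.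
apply: (@obs_contra x c d y H1 H2 xc dy cx _ _ nlxy' nlyx' _ _ _ yd _ _ _).
- exact: sameL_nle.
- by apply: sameL_nle; rewrite // eq_sym.
- by apply/negP => /le_L; rewrite Lc Ld leqNgt lxy.
- exact: sameL_nle.
- by apply: sameL_nle; rewrite // eq_sym.
- by rewrite Ld.
- by [].
- by rewrite Lc ltn_eqF.
Qed.

Definition pb (P : Prop) : bool := if excluded_middle_informative P then true else false.
Lemma pbP P : reflect P (pb P).
Proof. by rewrite /pb; case: excluded_middle_informative => h; constructor. Qed.

Lemma main_sec :
  (forall S : {set T}, level_induced le S -> ~ induced_iso le S (@O_obs1)) ->
  (forall S : {set T}, level_induced le S -> ~ induced_iso le S (@O_obs2)) ->
  exists A : {set T}, relatively_maximum_full_trunk le A.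
Proof.
move=> H1 H2.
have c0 : pb (chain le set0) by apply/pbP => x y; rewrite inE.
case: (@arg_maxnP _ set0 (fun C => pb (chain le C)) (fun C => #|C|) c0) => Cm /pbP cCm mCm.
have hCm : maxch Cm by split => // C' cC'; apply: mCm; apply/pbP.
set U := [set x | [exists A : {set T}, (x \in A) && pb (full_trunk le A)]].
have ftsub : forall A, full_trunk le A -> A \subset U.
  move=> A hA; apply/subsetP => x xA; rewrite inE; apply/existsP; exists A.
  by rewrite xA; apply/pbP.
have inU : forall x, x \in U -> exists A, exists C,
    [/\ trunk le A, maxch C, C \subset A & x \in A].
  move=> x; rewrite inE => /existsP[A /andP[xA /pbP [tA [C [mC sC]]]]].
  by exists A, C.
have key : forall x y, x \in U -> y \in U -> incomp le x y -> L x = L y.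
  move=> x y /inU[A1 [C1 [t1 m1 s1 x1]]] /inU[A2 [C2 [t2 m2 s2 y2]]] inc.
  case: (ltngtP (L x) (L y)) => // h; exfalso.
  - exact: (key_aux H1 H2 t1 m1 s1 x1 t2 m2 s2 y2 inc h).
  - by apply: (key_aux H1 H2 t2 m2 s2 y2 t1 m1 s1 x1 _ h); rewrite incompC.
have ftCm : full_trunk le Cm.
  split; last by exists Cm.
  move=> x y z xC yC _ _ _ _ /and3P[_ h1 h2].
  by have [cC _] := hCm; move: (cC _ _ xC yC); rewrite (negbTE h1) (negbTE h2).
have ftU : full_trunk le U.
  split; last by exists Cm; split => //; exact: ftsub.
  move=> x y z xU yU zU nxy nyz nxz ixy iyz.
  have e1 := key _ _ xU yU ixy; have e2 := key _ _ yU zU iyz.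
  rewrite /incomp nxz !sameL_nle //; first by rewrite e1 e2.
  by rewrite eq_sym.
  by rewrite e1 e2.
have mU : maximal_full_trunk le U.
  split => // B hB sUB; apply/eqP; rewrite eqEsubset sUB andbT; exact: ftsub.
exists U; split => // B [hB mB]; by apply/esym/mB => //; exact: ftsub.
Qed.

End Lev.

Theorem proposition8 (T : finType) (le : rel T) :
  partial_order le ->
  (forall S : {set T}, level_induced le S -> ~ induced_iso le S (@O_obs1)) ->
  (forall S : {set T}, level_induced le S -> ~ induced_iso le S (@O_obs2)) ->
  exists A : {set T}, relatively_maximum_full_trunk le A.
Proof.
case=> r a t; exact: main_sec.
Qed.
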